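(* In the basic model with an odd number $n$ of agents: - the leader election problem and the nontrivial move problem can each be solved in $O(\log N)$ rounds; - the location discovery problem can be solved in $n+O(\log N)$ rounds.
   Context: Model (basic): $n>4$ agents are at distinct, arbitrary initial positions on a circle of circumference $1$ and act in synchronised unit-time rounds. Each agent has its own notion of right (clockwise) and left; these need not be consistent across agents. At the start of each round every agent chooses a direction in $\{\text{right},\text{left}\}$ and moves at unit speed. Agents never pass: colliding agents instantly reverse direction. There is no communication. At the end of a round each agent learns only the clockwise distance, in its own orientation, from its start to its end position. Agents have distinct IDs in $\{1,\dots,N\}$, $N\ge n$ known, and know the parity of $n$. Rotation index: if $n_C$ agents start clockwise and $n_A$ anticlockwise (objective orientation), each agent moves to the initial position of the agent $(n_C-n_A)\bmod n$ places clockwise. A nontrivial move is a round with rotation index not in $\{0,n/2\}$. Problems: - Nontrivial move problem: assign each agent a direction so that the round in which all start in these directions is a nontrivial move. - Leader election: exactly one agent is ''leader''. - Location discovery: each agent determines the initial positions of all other agents relative to its own initial position. *)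

(* Defs.v *)
From HB Require Import structures.
From mathcomp Require Import all_boot all_order all_algebra.
From mathcomp Require Import reals.
Set Implicit Arguments. Unset Strict Implicit. Unset Printing Implicit Defensive.
Import Order.TTheory GRing.Theory Num.Theory.
Local Open Scope ring_scope.

(** Agents are indexed by ['I_n] in the (objective) clockwise order of their
  initial positions: agent [i] starts at [p i], with [0 <= p i < 1] and
  [p] strictly increasing.  [o i = true] iff agent [i]'s "right" is the
  objective clockwise direction.  [id i] is agent [i]'s identifier.

  A deterministic algorithm (for a known bound [N]) is a strategy
  [S : nat -> seq R -> bool]: agent with ID [k] and history of observations
  [h] (oldest first) moves right (in its own orientation) iff [S k h]. *)

Section Model.
Variable R : realType.

Definition cwd (a b : R) : R := if a <= b then b - a else 1 + b - a.

Definition rot n (k : 'I_n) (r : nat) : 'I_n :=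
  Ordinal (ltn_pmod (k + r) (leq_ltn_trans (leq0n k) (ltn_ord k))).

(** rotation index of a round, given the set of agents moving objectively
    clockwise: ((n_C - n_A) mod n) = (2 n_C) mod n, since n_A = n - n_C *)
Definition rotation_index (n : nat) (cw : 'I_n -> bool) : nat :=
  ((2 * #|[pred i | cw i]|) %% n)%N.

Definition nontrivial (n : nat) (r : nat) : bool :=
  ((r %% n != 0) && (2 * (r %% n) != n))%N.

Variables (n : nat) (p : 'I_n -> R) (o : 'I_n -> bool) (id : 'I_n -> nat).

Definition observed (i : 'I_n) (a b : 'I_n) : R :=
  if o i then cwd (p a) (p b) else cwd (p b) (p a).

(** Execution of [t] rounds of strategy [S]: returns the cumulative rotation
    [sh] (agent [i] is then at initial position of agent [rot i sh]) and the
    histories of observations of every agent. *)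
Fixpoint run (S : nat -> seq R -> bool) (t : nat) : nat * ('I_n -> seq R) :=
  match t with
  | 0 => (0%N, fun _ => [::])
  | t'.+1 =>
    let: (sh, h) := run S t' in
    let cw := fun i => S (id i) (h i) == o i in
    let r := rotation_index cw in
    ((sh + r)%N, fun i => rcons (h i) (observed i (rot i sh) (rot i (sh + r))))
  end.

Definition history (S : nat -> seq R -> bool) (t : nat) (i : 'I_n) : seq R :=
  (run S t).2 i.

Definition valid_instance (N : nat) : Prop :=
  [/\ (4 < n)%N, (n <= N)%N, injective id, (forall i, 1 <= id i <= N)%N
    & (forall i, 0 <= p i < 1) /\ (forall i j : 'I_n, (i < j)%N -> p i < p j)].

Definition relative_positions (i : 'I_n) : seq R :=
  [seq observed i i j | j <- enum 'I_n & j != i].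

End Model.

(* Main.v *)
Require Import Defs.
From HB Require Import structures.
From mathcomp Require Import all_boot all_order all_algebra.
From mathcomp Require Import reals.
From mathcomp Require Import zify lra.
Require Import Defs.
Set Implicit Arguments. Unset Strict Implicit. Unset Printing Implicit Defensive.
Import Order.TTheory GRing.Theory Num.Theory.
Lemma card_sum n (A : {set 'I_n}) : #|A| = \sum_(i < n) (i \in A).
Proof. by rewrite -sum1_card big_mkcond /=; apply: eq_bigr => i _; case: (i \in A). Qed.
Lemma card_pred_sum n (f : 'I_n -> bool) : #|[pred i | f i]| = \sum_(i < n) f i.
Proof. by rewrite -sum1_card big_mkcond /=; apply: eq_bigr => i _; rewrite inE; case: (f i). Qed.

Lemma cnt n (o : 'I_n -> bool) (Y : {set 'I_n}) :
  #|[pred i | (i \in Y) == o i]| + #|[set i | o i]| + #|Y| = n + 2 * #|Y :&: [set i | o i]|.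
Proof.
have E : \sum_(i < n) 1 = n by rewrite sum1_card card_ord.
rewrite card_pred_sum !card_sum -!big_split /= big_distrr /=.
transitivity (\sum_(i < n) (1 + 2 * (i \in Y :&: [set i | o i]))); last by rewrite big_split /= E.
apply: eq_bigr => i _; rewrite !inE; case: (i \in Y); case: (o i) => //.
Qed.

Section Alg.
Variable K : nat.
Definition BB := 4 * K.
Definition bit j k := odd (k %/ 2 ^ j).
Fixpoint cand k (eq : nat -> nat -> bool) j : bool :=
  match j with
  | 0 => true
  | j'.+1 => cand k eq j' &&
     (if ~~ eq (4 * j') (4 * j').+2 then bit j' k
      else if ~~ eq (4 * j').+2 (4 * j'.+1) then ~~ bit j' k else true)
  end.
Fixpoint Lf (eq : nat -> nat -> bool) m :=
  match m with
  | 0 => 0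
  | m'.+1 => if 0 < Lf eq m' then Lf eq m' else if eq BB (BB + m'.+1) then m'.+1 else 0
  end.
Definition move k t (eq : nat -> nat -> bool) :=
  if t < BB then
    (if ~~ odd (t %% 4) then true
     else cand k eq (t %/ 4) && (if t %% 4 == 1 then bit (t %/ 4) k else ~~ bit (t %/ 4) k))
  else ~~ [&& cand k eq K, 0 < Lf eq (t - BB) & Lf eq (t - BB) %| (t - BB)].
Definition det (eq : nat -> nat -> bool) Lv s :=
  [&& 0 < Lv, Lv < s & has (fun l => eq (BB + l) (BB + s)) (iota 0 s)].
Fixpoint Df eq Lv M :=
  match M with
  | 0 => 0
  | M'.+1 => if 0 < Df eq Lv M' then Df eq Lv M' else if det eq Lv M'.+1 then M'.+1 else 0
  end.
End Alg.

Lemma bits_eq K a b : a < 2 ^ K -> b < 2 ^ K ->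
  (forall j, j < K -> bit j a = bit j b) -> a = b.
Proof.
elim: K a b => [|K IH] a b.
  by rewrite expn0 !ltnS !leqn0 => /eqP -> /eqP ->.
move=> ha hb hbit.
have h0 := hbit 0 isT; rewrite /bit !expn0 !divn1 in h0.
have h1 : a./2 = b./2.
  apply: IH.
  - by rewrite -divn2 ltn_divLR // -expnSr.
  - by rewrite -divn2 ltn_divLR // -expnSr.
  move=> j hj; have := hbit j.+1 hj; by rewrite /bit expnS !divnMA !divn2.
by rewrite -(odd_double_half a) -(odd_double_half b) h0 h1.
Qed.

Lemma mod_add_eq n a x : (a %% n == (a + x) %% n) = (n %| x).
Proof. by rewrite -{1}(addn0 a) eqn_modDl mod0n eq_sym. Qed.

Lemma dvd_small n m : n %| m -> m < n -> m = 0.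
Proof. by move=> h hm; apply/eqP; apply: contraTT hm => hm0; rewrite -leqNgt dvdn_leq // lt0n. Qed.

Section Global.
Variables (n : nat) (o : 'I_n -> bool) (id : 'I_n -> nat) (K : nat) (gsh : nat -> nat).
Hypothesis Hn : 4 < n.
Hypothesis Hodd : odd n.
Hypothesis Hid : injective id.
Hypothesis Hidb : forall i, id i < 2 ^ K.
Definition GG l m := gsh l %% n == gsh m %% n.
Hypothesis Hrec : forall t,
  gsh t.+1 = gsh t + rotation_index (fun i : 'I_n => move K (id i) t GG == o i).

Definition OO := [set i : 'I_n | o i].
Definition PP := #|OO|.
Definition EE (X : {set 'I_n}) := n + 2 * #|X :&: OO| - #|X|.
Definition cnt_of t := #|[pred i : 'I_n | move K (id i) t GG == o i]|.

Lemma n_gt0 : 0 < n. Proof. by apply: leq_trans Hn. Qed.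

Lemma card_le (X : {set 'I_n}) : #|X| <= n.
Proof. by rewrite -[n in _ <= n]card_ord max_card. Qed.

Lemma coprime_n2 : coprime n 2.
Proof. by rewrite coprimen2. Qed.

Lemma G2 t : GG t t.+2 = (n %| cnt_of t + cnt_of t.+1).
Proof.
rewrite /GG Hrec (Hrec t) /rotation_index -addnA mod_add_eq.
rewrite -/(cnt_of t) -/(cnt_of t.+1).
rewrite /dvdn modnDm -mulnDr -/(dvdn _ _) Gauss_dvdr //; exact: coprime_n2.
Qed.

Lemma G1 t : GG t t.+1 = (n %| cnt_of t).
Proof.
rewrite /GG (Hrec t) /rotation_index mod_add_eq -/(cnt_of t).
by rewrite /dvdn modn_mod -/(dvdn _ _) Gauss_dvdr //; exact: coprime_n2.
Qed.

Lemma cntY (Y : {set 'I_n}) t : (forall i, move K (id i) t GG = (i \in Y)) ->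
  PP + cnt_of t = EE Y.
Proof.
move=> hm; have := cnt o Y; rewrite /cnt_of /EE /PP -/OO.
have -> : #|[pred i | move K (id i) t GG == o i]| = #|[pred i | (i \in Y) == o i]|.
  by apply: eq_card => i; rewrite !inE hm.
have := card_le Y; lia.
Qed.

Lemma cntT t : (forall i, move K (id i) t GG = true) -> cnt_of t = PP.
Proof.
move=> hm; rewrite /cnt_of /PP; apply: eq_card => i; by rewrite !inE hm.
Qed.

Definition CC j := [set i : 'I_n | cand (id i) GG j].
Definition Sb j := [set i : 'I_n | bit j (id i)].
Definition AA j := CC j :&: Sb j.
Definition BS j := CC j :\: Sb j.

Lemma move_lead j q i : j < K -> q < 4 ->
  move K (id i) (4 * j + q) GG =
  if ~~ odd q then true else (i \in CC j) && (if q == 1 then bit j (id i) else ~~ bit j (id i)).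
Proof.
move=> hj hq; rewrite /move /BB.
have -> : 4 * j + q < 4 * K by lia.
have -> : (4 * j + q) %% 4 = q by lia.
have -> : (4 * j + q) %/ 4 = j by lia.
by rewrite /CC inE.
Qed.

Lemma testA j : j < K -> GG (4 * j) (4 * j).+2 = (n %| EE (AA j)).
Proof.
move=> hj; rewrite G2 -(addn0 (4 * j)) cntT; last by move=> i; rewrite move_lead.
rewrite -addn1 -addnA /= (cntY (Y := AA j)) // => i.
by rewrite move_lead // /AA !inE.
Qed.

Lemma testB j : j < K -> GG (4 * j).+2 (4 * j.+1) = (n %| EE (BS j)).
Proof.
move=> hj; have -> : 4 * j.+1 = (4 * j).+2.+2 by lia.
rewrite G2 -addn2 cntT; last by move=> i; rewrite move_lead.
rewrite (_ : (4 * j + 2).+1 = 4 * j + 3); last by lia.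
rewrite (cntY (Y := BS j)) // => i.
by rewrite move_lead // /BS !inE andbC.
Qed.

Definition unan := (PP == 0) || (PP == n).

Lemma EE_split j : EE (AA j) + EE (BS j) = n + EE (CC j).
Proof.
have h1 : #|AA j| + #|BS j| = #|CC j|.
  rewrite !card_sum -big_split; apply: eq_bigr => i _; rewrite /AA /BS /CC /Sb !inE.
  by case: (cand (id i) GG j); case: (bit j (id i)).
have h2 : #|AA j :&: OO| + #|BS j :&: OO| = #|CC j :&: OO|.
  rewrite !card_sum -big_split; apply: eq_bigr => i _; rewrite /AA /BS /CC /Sb /OO !inE.
  by case: (cand (id i) GG j); case: (bit j (id i)); case: (o i).
have := card_le (CC j); have := subset_leq_card (subsetIl (AA j) OO).
have := subset_leq_card (subsetIl (BS j) OO); have := card_le (AA j); have := card_le (BS j); rewrite /EE -h1 -h2; move: #|AA j| #|BS j| #|AA j :&: OO| #|BS j :&: OO| => a b c d; lia.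
Qed.

Lemma EE0 : EE set0 = n.
Proof. by rewrite /EE set0I !cards0 muln0 addn0 subn0. Qed.

Lemma dvd_sub_small a : a <= n -> n %| n - a -> (a == 0) || (a == n).
Proof.
move=> ha hd; case: (posnP (n - a)) => h; first by apply/orP; right; apply/eqP; lia.
case: (posnP a) => h'; first by rewrite h'.
have := dvd_small hd; lia.
Qed.

Lemma EE_unan X : unan -> n %| EE X -> (#|X| == 0) || (#|X| == n).
Proof.
move=> /orP [] /eqP hP hd.
  have : #|X :&: OO| = 0 by apply/eqP; rewrite -leqn0 -hP /PP subset_leq_card // subsetIr.
  move: hd; rewrite /EE => + h0; rewrite h0 muln0 addn0.
  by apply: dvd_sub_small; exact: card_le.
have hXO : #|X :&: OO| = #|X|.
  have := cardsUI X OO; have := card_le (X :|: OO).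
  have := subset_leq_card (subsetIl X OO); rewrite -/PP hP; lia.
move: hd; rewrite /EE hXO.
have -> : n + 2 * #|X| - #|X| = n + #|X| by lia.
rewrite dvdn_addr // => hd.
have := card_le X; case: (posnP #|X|) => h0 hle; first by rewrite h0.
by rewrite (eqn_leq _ n) hle dvdn_leq.
Qed.

Lemma EET : EE setT = 2 * PP.
Proof. rewrite /EE setTI cardsT card_ord -/PP; lia. Qed.

Lemma nonunan_T : ~~ unan -> ~~ (n %| EE setT).
Proof.
move=> hu; apply/negP; rewrite EET Gauss_dvdr; last exact: coprime_n2.
move=> hd; move: hu; rewrite /unan.
have hP : PP <= n by exact: card_le.
case: (posnP PP) => h0; first by rewrite h0.
by rewrite (eqn_leq _ n) hP dvdn_leq.
Qed.

Lemma CC_step j i : j < K ->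
  (i \in CC j.+1) = (i \in CC j) &&
    (if ~~ (n %| EE (AA j)) then bit j (id i)
     else if ~~ (n %| EE (BS j)) then ~~ bit j (id i) else true).
Proof. by move=> hj; rewrite /CC !inE /= -testA // -testB. Qed.

Definition Inv j := [/\ CC j != set0, ~~ (n %| EE (CC j)) || unan &
  forall i i', i \in CC j -> i' \in CC j -> forall j', j' < j -> bit j' (id i) = bit j' (id i')].

Lemma Inv0 : Inv 0.
Proof.
have hT : CC 0 = setT by apply/setP => i; rewrite !inE.
split; rewrite hT //.
- apply/set0Pn; exists (Ordinal n_gt0); by rewrite inE.
- by case: (boolP unan) => hu; rewrite ?orbT // nonunan_T.
Qed.

Lemma Inv_step j : j < K -> Inv j -> Inv j.+1.
Proof.
move=> hj [hne hd hb].
case: (boolP (n %| EE (AA j))) => hA.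
  case: (boolP (n %| EE (BS j))) => hB.
  -
    have hC : CC j.+1 = CC j by apply/setP => i; rewrite CC_step // hA hB andbT.
    have hdC : n %| EE (CC j).
      by rewrite -(dvdn_addr _ (dvdnn n)) -EE_split dvdn_add.
    have hu : unan by case/orP: hd => // /negP.
    have hsz : #|AA j| + #|BS j| = #|CC j|.
      rewrite !card_sum -big_split; apply: eq_bigr => i _; rewrite /AA /BS /CC /Sb !inE.
      by case: (cand (id i) GG j); case: (bit j (id i)).
    have hcpos : 0 < #|CC j| by rewrite card_gt0.
    have hCle := card_le (CC j).
    move: (EE_unan hu hA) (EE_unan hu hB) => /orP [] /eqP ha /orP [] /eqP hb';
      try (exfalso; move: hsz hcpos hCle; rewrite ha hb'; move: #|CC j| => c; lia).
    + split; [by rewrite hC | by rewrite hC hu orbT | rewrite hC].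
      move=> i i' hi hi' j'; rewrite ltnS leq_eqVlt => /orP [/eqP ->|]; last exact: hb.
      have : AA j = set0 by apply/eqP; rewrite -cards_eq0 ha.
      move=> /setP h0; have := h0 i; have := h0 i'; rewrite !inE.
      move: hi hi'; rewrite /CC !inE => -> -> /= /negbT h1 /negbT h2.
      by rewrite (negbTE h1) (negbTE h2).
    + split; [by rewrite hC | by rewrite hC hu orbT | rewrite hC].
      move=> i i' hi hi' j'; rewrite ltnS leq_eqVlt => /orP [/eqP ->|]; last exact: hb.
      have : BS j = set0 by apply/eqP; rewrite -cards_eq0 hb'.
      move=> /setP h0; have := h0 i; have := h0 i'; rewrite !inE.
      move: hi hi'; rewrite /CC !inE => -> -> /=; rewrite andbT.
      by case: (bit j (id i)); case: (bit j (id i')).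
  - have hC : CC j.+1 = BS j by apply/setP => i; rewrite CC_step // hA hB /BS !inE andbC.
    split; rewrite hC ?hB //.
    + by apply: contraNneq hB => ->; rewrite EE0 dvdnn.
    move=> i i' hi hi' j'; rewrite ltnS leq_eqVlt => /orP [/eqP ->|hj'].
      by move: hi hi'; rewrite !inE => /andP [/negbTE -> _] /andP [/negbTE -> _].
    by apply: hb => //; [move: hi | move: hi']; rewrite !inE => /andP [].
have hC : CC j.+1 = AA j by apply/setP => i; rewrite CC_step // hA /AA !inE.
split; rewrite hC ?hA //.
- by apply: contraNneq hA => ->; rewrite EE0 dvdnn.
move=> i i' hi hi' j'; rewrite ltnS leq_eqVlt => /orP [/eqP ->|hj'].
  by move: hi hi'; rewrite !inE => /andP [_ ->] /andP [_ ->].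
by apply: hb => //; [move: hi | move: hi']; rewrite !inE => /andP [].
Qed.

Lemma InvK : Inv K.
Proof.
have : forall j, j <= K -> Inv j.
  elim=> [|j IH] hj; first exact: Inv0.
  by apply: Inv_step => //; apply: IH; apply: ltnW.
by move=> h; apply: h.
Qed.

Lemma leader_unique : exists L0 : 'I_n, CC K = [set L0].
Proof.
have [hne _ hb] := InvK.
have /set0Pn [x hx] := hne.
exists x; apply/setP => i; rewrite inE; apply/idP/eqP => [hi|->//].
by apply: Hid; apply: bits_eq; [exact: Hidb|exact: Hidb|exact: hb].
Qed.

Lemma GGsym l m : GG l m = GG m l.
Proof. by rewrite /GG eq_sym. Qed.

Lemma PP_le : PP <= n. Proof. exact: card_le. Qed.

Lemma unan_dvd : unan = (n %| PP).
Proof.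
rewrite /unan; case: (posnP PP) => h0; first by rewrite h0 dvdn0.
have := PP_le; rewrite leq_eqVlt => /orP [/eqP ->|hlt]; first by rewrite dvdnn eqxx orbT.
have -> : (n %| PP) = false by apply/negP => hd; have := dvd_small hd hlt; lia.
by apply/negP => /orP [] /eqP; lia.
Qed.

Section Tour.
Variable L0 : 'I_n.
Hypothesis HL0 : CC K = [set L0].

Lemma cand_L0 i : cand (id i) GG K = (i == L0).
Proof. by have := HL0 => /setP /(_ i); rewrite !inE. Qed.

Definition flip s := (0 < Lf K GG s) && (Lf K GG s %| s).
Definition c1 := PP + 1 - 2 * o L0.

Lemma move_tour i s : move K (id i) (BB K + s) GG = ~~ ((i == L0) && flip s).
Proof.
rewrite /move ltnNge leq_addr /= cand_L0.
by rewrite (_ : BB K + s - BB K = s) //; lia.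
Qed.

Lemma oL0_le : o L0 <= PP.
Proof.
case h: (o L0) => //=; rewrite /PP card_gt0; apply/set0Pn; exists L0; by rewrite inE.
Qed.

Lemma cnt_tour s : cnt_of (BB K + s) = if flip s then c1 else PP.
Proof.
case hf: (flip s).
  have := cntY (Y := ~: [set L0]) (t := BB K + s).
  have hm : forall i, move K (id i) (BB K + s) GG = (i \in ~: [set L0]).
    by move=> i; rewrite move_tour hf andbT !inE.
  move=> /(_ hm); rewrite /EE.
  have -> : ~: [set L0] :&: OO = OO :\ L0 by apply/setP => i; rewrite !inE andbC.
  have hc : #|~: [set L0]| = n.-1 by rewrite cardsC1 card_ord.
  have := cardsD1 L0 OO; rewrite hc -/PP inE /c1.
  have := oL0_le; have := n_gt0; rewrite /PP.
  move: (cnt_of _) #|OO| #|OO :\ L0| (o L0) => c p q [] /=; lia.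
by apply: cntT => i; rewrite move_tour hf andbF.
Qed.

Lemma nontriv_of c : ~~ (n %| c) -> nontrivial n ((2 * c) %% n).
Proof.
move=> hc; rewrite /nontrivial modn_mod; apply/andP; split.
  by rewrite -/(dvdn n (2 * c)) Gauss_dvdr //; exact: coprime_n2.
apply/negP => /eqP h; move: Hodd; by rewrite -h mul2n odd_double.
Qed.

Lemma cnt_notL0 : #|[pred i : 'I_n | (i != L0) == o i]| = c1.
Proof.
have := cnt o (~: [set L0]).
have -> : #|[pred i | (i \in ~: [set L0]) == o i]| = #|[pred i : 'I_n | (i != L0) == o i]|.
  by apply: eq_card => i; rewrite !inE.
have -> : ~: [set L0] :&: [set i | o i] = OO :\ L0 by apply/setP => i; rewrite !inE andbC.
have hc : #|~: [set L0]| = n.-1 by rewrite cardsC1 card_ord.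
have := cardsD1 L0 OO; rewrite hc -/PP inE /c1 -/OO.
have := oL0_le; have := n_gt0; rewrite /PP.
move: #|[pred i | (i != L0) == o i]| #|OO| #|OO :\ L0| (o L0) => c p q [] /=; lia.
Qed.

Lemma dir_nontrivial :
  nontrivial n (rotation_index (fun i : 'I_n => ~~ ((i == L0) && GG (BB K) (BB K).+1) == o i)).
Proof.
have hG : GG (BB K) (BB K).+1 = unan.
  by rewrite G1 unan_dvd -(addn0 (BB K)) cnt_tour /flip /=.
rewrite hG /rotation_index; case: (boolP unan) => hu.
  have -> : #|[pred i : 'I_n | ~~ ((i == L0) && true) == o i]| = c1.
    by rewrite -cnt_notL0; apply: eq_card => i; rewrite !inE andbT.
  apply: nontriv_of; move: hu; rewrite /unan /c1 => /orP [] /eqP hP.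
    have : o L0 <= PP := oL0_le; rewrite hP; case: (o L0) => //= _.
    by rewrite dvdn1; apply/eqP; lia.
  have hL : o L0.
    apply: contraT => hL; have : #|OO| <= #|~: [set L0]|.
      by apply: subset_leq_card; apply/subsetP => i; rewrite !inE; apply: contraTneq => ->.
    by rewrite cardsC1 card_ord -/PP hP; lia.
  rewrite hL hP; apply/negP => hd; have := dvd_small hd; lia.
have -> : #|[pred i : 'I_n | ~~ ((i == L0) && false) == o i]| = PP.
  by apply: eq_card => i; rewrite !inE andbF.
by apply: nontriv_of; rewrite -unan_dvd.
Qed.


Definition gg := gcdn PP n.
Definition Ls := n %/ gg.
Lemma gg_gt0 : 0 < gg. Proof. by rewrite /gg gcdn_gt0 n_gt0 orbT. Qed.
Lemma n_eq : n = Ls * gg. Proof. by rewrite /Ls divnK // dvdn_gcdr. Qed.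
Lemma Ls_gt0 : 0 < Ls.
Proof. rewrite lt0n; apply/negP => /eqP h; have := n_eq; rewrite h mul0n; have := n_gt0; lia. Qed.
Lemma Ls_le : Ls <= n.
Proof. exact: leq_div. Qed.

Lemma dvd_vP v : (n %| v * PP) = (Ls %| v).
Proof.
have -> : (n %| v * PP) = (n %| gcdn (v * PP) (v * n)).
  by rewrite dvdn_gcd (dvdn_mull _ (dvdnn n)) andbT.
by rewrite -muln_gcdr -/gg {1}n_eq dvdn_pmul2r // gg_gt0.
Qed.

Lemma coprime_c1 : coprime c1 gg.
Proof.
have hg : gg %| PP by rewrite /gg dvdn_gcdl.
rewrite /c1; have := oL0_le; case: (o L0) => /= h.
  have -> : PP + 1 - 2 = PP.-1 by lia.
  apply: (coprime_dvdr hg); have -> : PP = PP.-1.+1 by lia.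
  by rewrite /= coprimenS.
have -> : PP + 1 - 0 = PP.+1 by lia.
apply: (coprime_dvdr hg); exact: coprimeSn.
Qed.

Lemma mod_cancel a b c d : coprime d c -> (a * c == b * c %[mod d]) -> a = b %[mod d].
Proof.
move=> hc; wlog hab : a b / b <= a.
  move=> W h; case: (leqP b a) => hba; first exact: W.
  by apply/esym; apply: W; [exact: ltnW | rewrite eq_sym].
rewrite eqn_mod_dvd ?leq_mul2r ?hab ?orbT // -mulnBl Gauss_dvdl //.
by move=> hd; apply/eqP; rewrite eqn_mod_dvd.
Qed.

Definition FF s := s.-1 %/ Ls.
Definition XX s := (s - FF s) * PP + FF s * c1.
Definition zz s := gsh (BB K + s).
Definition Hflip s := forall v, v < s -> flip v = (0 < v) && (Ls %| v).

Lemma FF_le s : FF s <= s.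
Proof. rewrite /FF; apply: (leq_trans (leq_div _ _)); lia. Qed.

Lemma zz_step s : zz s.+1 = zz s + (2 * (if flip s then c1 else PP)) %% n.
Proof. by rewrite /zz addnS Hrec /rotation_index -/(cnt_of _) cnt_tour. Qed.

Lemma FF_S s : FF s.+1 = FF s + ((0 < s) && (Ls %| s)).
Proof.
rewrite /FF /=; case: s => [|s] /=; first by rewrite div0n.
by rewrite divnS ?Ls_gt0 // addnC.
Qed.

Lemma closed s : Hflip s -> zz s %% n = (zz 0 + 2 * XX s) %% n.
Proof.
elim: s => [|s IH] hf; first by rewrite /XX /FF /= div0n !muln0 addn0.
have hf' : Hflip s by move=> v hv; apply: hf; apply: ltnW.
rewrite zz_step modnDmr -modnDml IH // modnDml (hf s (ltnSn s)) -addnA -mulnDr.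
congr ((_ + 2 * _) %% n).
rewrite /XX FF_S; have := FF_le s.
case: ((0 < s) && (Ls %| s)) => /=.
  rewrite addn1; move: (FF s) => f hf0.
  have -> : s.+1 - f.+1 = s - f by lia.
  by rewrite mulSn; lia.
rewrite addn0; move: (FF s) => f hf0.
have -> : s.+1 - f = (s - f).+1 by lia.
by rewrite mulSn; lia.
Qed.


Lemma dvd2 x : (n %| 2 * x) = (n %| x).
Proof. by rewrite Gauss_dvdr //; exact: coprime_n2. Qed.

Lemma GG_tour l m : GG (BB K + l) (BB K + m) = (zz l %% n == zz m %% n).
Proof. by []. Qed.

Lemma Lf_val u : Hflip u -> Lf K GG u = if Ls <= u then Ls else 0.
Proof.
elim: u => [|u IH] hf /=; first by rewrite leqNgt Ls_gt0.
have hf' : Hflip u by move=> v hv; apply: hf; apply: ltnW.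
rewrite IH //; case: (leqP Ls u) => hu.
  by rewrite Ls_gt0 (leq_trans hu (leqnSn u)).
rewrite ltnn.
have -> : GG (BB K) (BB K + u.+1) = (zz 0 %% n == zz u.+1 %% n) by rewrite /GG /zz addn0.
rewrite (closed hf) -{1}(addn0 (zz 0)).
have hF : FF u.+1 = 0 by rewrite /FF /= divn_small.
rewrite eqn_modDl /XX hF subn0 mul0n addn0 mod0n eq_sym -/(dvdn _ _) dvd2 dvd_vP.
case: (boolP (Ls %| u.+1)) => hd.
  have := dvdn_leq (ltn0Sn u) hd => hle.
  have -> : u.+1 = Ls by apply/eqP; rewrite eqn_leq hu hle.
  by rewrite leqnn.
case: (leqP Ls u.+1) => // hle.
exfalso; move/negP: hd; apply.
have -> : u.+1 = Ls by apply/eqP; rewrite eqn_leq hu hle.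
exact: dvdnn.
Qed.


Lemma Hflip_all s : Hflip s.
Proof.
elim: s => [|s IH] v //; rewrite ltnS leq_eqVlt => /orP [/eqP ->|]; last exact: IH.
rewrite /flip (Lf_val IH); case: (leqP Ls s) => hs.
  rewrite Ls_gt0 /=; case: s IH hs => [|s] _ hs; first by move: Ls_gt0; lia.
  by [].
rewrite ltnn /=; case: (boolP (Ls %| s)) => hd; rewrite ?andbF //.
case: s hs hd {IH} => [|s] // hs hd.
by have := dvdn_leq (ltn0Sn s) hd; lia.
Qed.

Lemma closed_all s : zz s %% n = (zz 0 + 2 * XX s) %% n.
Proof. exact: (closed (@Hflip_all s)). Qed.

Lemma Lf_all u : Lf K GG u = if Ls <= u then Ls else 0.
Proof. exact: (Lf_val (@Hflip_all u)). Qed.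

Lemma FF_lt s : 0 < s -> s <= n -> FF s < gg.
Proof. move=> h0 hs; rewrite /FF ltn_divLR ?Ls_gt0 // mulnC -n_eq; lia. Qed.

Lemma inj_aux l m f : m <= l -> f <= m -> FF l = FF m -> 0 < m ->
  ((l - f) * PP == (m - f) * PP %[mod n]) -> l = m.
Proof.
move=> hml hfm hF hm0.
rewrite eqn_mod_dvd ?leq_mul2r ?leq_sub2r ?orbT // -mulnBl.
have -> : l - f - (m - f) = l - m by lia.
rewrite -/(dvdn _ _) dvd_vP => hd.
case: (posnP (l - m)) => hlm; first by lia.
have := dvdn_leq hlm hd.
move: hF; rewrite /FF => hF.
have e1 := divn_eq l.-1 Ls; have e2 := divn_eq m.-1 Ls.
have r1 := ltn_pmod l.-1 Ls_gt0; have r2 := ltn_pmod m.-1 Ls_gt0.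
rewrite hF in e1; move: e1 e2 r1 r2; move: (m.-1 %/ Ls * Ls) (l.-1 %% Ls) (m.-1 %% Ls) => w a b.
lia.
Qed.

Lemma zz_inj l m : 0 < l -> l <= n -> 0 < m -> m <= n ->
  zz l %% n = zz m %% n -> l = m.
Proof.
move=> hl0 hl hm0 hm; rewrite !closed_all => /eqP; rewrite eqn_modDl => h.
have hX : XX l = XX m %[mod n].
  apply: (mod_cancel (c := 2)); first by rewrite coprimen2.
  by rewrite mulnC [XX m * 2]mulnC.
have hg : gg %| n by rewrite /gg dvdn_gcdr.
have hgP : gg %| PP by rewrite /gg dvdn_gcdl.
have hXg : XX l = XX m %[mod gg] by rewrite -(modn_dvdm _ hg) hX modn_dvdm.
have hF : FF l = FF m.
  have : FF l * c1 = FF m * c1 %[mod gg].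
    move: hXg; rewrite /XX -modnDml -[in X in _ = X]modnDml.
    have e : forall x, (x * PP) %% gg = 0.
      by move=> x; apply/eqP; rewrite -/(dvdn _ _) dvdn_mull.
    by rewrite !e !add0n.
  have hc : coprime gg c1 by rewrite coprime_sym coprime_c1.
  by move/eqP/(mod_cancel hc); rewrite !modn_small ?FF_lt.
move: h hX; rewrite /XX hF => _; move: (FF_le m) (FF_le l); rewrite hF => hfm hfl.
move/eqP; rewrite eqn_modDr => hX; clear hXg.
case: (leqP m l) => hml.
  by apply: (inj_aux (f := FF m)).
apply/esym; apply: (inj_aux (f := FF m)) => //; [exact: ltnW | by rewrite eq_sym].
Qed.


Lemma zz_Ls : zz Ls %% n = zz 0 %% n.
Proof.
rewrite closed_all /XX /FF.
have -> : Ls.-1 %/ Ls = 0 by rewrite divn_small // prednK ?Ls_gt0.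
rewrite subn0 mul0n addn0 -modnDmr.
have -> : (2 * (Ls * PP)) %% n = 0 by apply/eqP; rewrite -/(dvdn _ _) dvd2 dvd_vP.
by rewrite addn0.
Qed.

Lemma det_small Lv s : (Lv = 0 \/ Lv = Ls) -> s <= n -> det K GG Lv s = false.
Proof.
move=> hLv hs; rewrite /det; case: hLv => ->; first by rewrite ltnn.
rewrite Ls_gt0 /=; case: (ltnP Ls s) => hsL //=.
apply/hasP => [[l]]; rewrite mem_iota add0n => /andP [_ hl].
rewrite GG_tour => /eqP.
case: (posnP l) => [->|hl0].
  rewrite -zz_Ls => /(zz_inj Ls_gt0 Ls_le) => h.
  by move: hsL; rewrite -h ?ltnn //; lia.
move=> /(zz_inj hl0) h; have := h (ltnW (leq_trans hl hs)).
by move=> /(_ (leq_trans Ls_gt0 (ltnW hsL)) hs) => e; move: hl; rewrite e ltnn.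
Qed.

Lemma det_hit : det K GG Ls n.+1.
Proof.
rewrite /det Ls_gt0 ltnS Ls_le !andTb.
set sres := [seq zz l %% n | l <- iota 1 n].
have hu : uniq sres.
  rewrite map_inj_in_uniq ?iota_uniq // => l m; rewrite !mem_iota.
  move=> /andP [hl1 hl2] /andP [hm1 hm2]; apply: zz_inj; lia.
have hsub : {subset sres <= iota 0 n}.
  move=> x /mapP [l _ ->]; by rewrite mem_iota add0n ltn_pmod // n_gt0.
have hsz : size (iota 0 n) <= size sres by rewrite size_iota size_map size_iota.
have [_ heq] := uniq_min_size hu hsub hsz.
have : zz n.+1 %% n \in sres by rewrite heq mem_iota add0n ltn_pmod // n_gt0.
move=> /mapP [l hl e]; apply/hasP; exists l.
  by move: hl; rewrite !mem_iota; lia.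
by rewrite GG_tour e.
Qed.

Lemma Df_Ls M : Df K GG Ls M = if n < M then n.+1 else 0.
Proof.
elim: M => [|M IH] //=; rewrite IH.
case: (ltnP n M) => hM; first by rewrite ltn0Sn ltnS (ltnW hM).
rewrite ltnn; have -> : (n < M.+1) = (M == n) by apply/idP/eqP; lia.
case: (eqVneq M n) => [->|hne]; first by rewrite det_hit.
rewrite det_small //; [by right | lia].
Qed.

Lemma Df_0 M : Df K GG 0 M = 0.
Proof.
elim: M => [|M IH] //=; by rewrite IH /det.
Qed.

Lemma Df_all M : Df K GG (Lf K GG M) M = if n < M then n.+1 else 0.
Proof.
rewrite Lf_all; case: (leqP Ls M) => h; first exact: Df_Ls.
rewrite Df_0; case: (ltnP n M) => // hM; have := Ls_le; lia.
Qed.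

Lemma rot_uniq (i : 'I_n) : uniq [seq rot i (zz l) | l <- iota 1 n].
Proof.
rewrite map_inj_in_uniq ?iota_uniq // => l m; rewrite !mem_iota.
move=> /andP [hl1 hl2] /andP [hm1 hm2] /(congr1 val) /= /eqP.
rewrite eqn_modDl => /eqP; apply: zz_inj; lia.
Qed.
End Tour.
End Global.


Definition agree t (eq eq' : nat -> nat -> bool) :=
  forall l m, l <= t -> m <= t -> eq l m = eq' l m.

Lemma agree_le t t' eq eq' : t' <= t -> agree t eq eq' -> agree t' eq eq'.
Proof. by move=> h ha l m hl hm; apply: ha; apply: leq_trans h. Qed.

Lemma cand_congr k j eq eq' : agree (4 * j) eq eq' -> cand k eq j = cand k eq' j.
Proof.
elim: j => [|j IH] ha //=.
rewrite IH; last by apply: agree_le ha; lia.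
by rewrite !ha //; lia.
Qed.

Lemma Lf_congr K m eq eq' : agree (BB K + m) eq eq' -> Lf K eq m = Lf K eq' m.
Proof.
elim: m => [|m IH] ha //=.
rewrite IH; last by apply: agree_le ha; lia.
by rewrite ha //; lia.
Qed.

Lemma move_congr K k t eq eq' : agree t eq eq' -> move K k t eq = move K k t eq'.
Proof.
move=> ha; rewrite /move; case: ifP => ht.
  have e : cand k eq (t %/ 4) = cand k eq' (t %/ 4).
    apply: cand_congr; apply: agree_le ha.
    by rewrite {2}(divn_eq t 4) mulnC; apply: leq_addr.
  by rewrite e.
have hB : BB K <= t by rewrite leqNgt ht.
have e1 : cand k eq K = cand k eq' K.
  by apply: cand_congr; apply: agree_le ha; rewrite /BB in hB; lia.
have e2 : Lf K eq (t - BB K) = Lf K eq' (t - BB K).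
  by apply: Lf_congr; apply: agree_le ha; lia.
by rewrite e1 e2.
Qed.

Lemma det_congr K Lv s eq eq' : agree (BB K + s) eq eq' -> det K eq Lv s = det K eq' Lv s.
Proof.
move=> ha; rewrite /det; congr [&& _, _ & _]; apply: eq_in_has => l.
rewrite mem_iota add0n => /andP [_ hl]; apply: ha; lia.
Qed.

Lemma Df_congr K Lv M eq eq' : agree (BB K + M) eq eq' -> Df K eq Lv M = Df K eq' Lv M.
Proof.
elim: M => [|M IH] ha //=.
rewrite IH; last by apply: agree_le ha; lia.
by rewrite (det_congr Lv ha).
Qed.

Section RealL.
Variable R : realType.
Local Open Scope ring_scope.

Definition red (x : R) := if x < 1 then x else x - 1.

Lemma cwd_range (a b : R) : 0 <= a < 1 -> 0 <= b < 1 -> 0 <= cwd a b < 1.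
Proof.
move=> /andP [ha0 ha1] /andP [hb0 hb1]; rewrite /cwd.
case: (leP a b) => h; apply/andP; split; lra.
Qed.

Lemma red_chain (a b c : R) : 0 <= a < 1 -> 0 <= b < 1 -> 0 <= c < 1 ->
  red (cwd a b + cwd b c) = cwd a c.
Proof.
move=> /andP [ha0 ha1] /andP [hb0 hb1] /andP [hc0 hc1]; rewrite /red /cwd.
case: (leP a b) => h1; case: (leP b c) => h2; case: (leP a c) => h3;
  case: ltP => h4; lra.
Qed.

Lemma cwd_inj (a b c : R) : 0 <= a < 1 -> 0 <= b < 1 -> 0 <= c < 1 ->
  cwd a b = cwd a c -> b = c.
Proof.
move=> /andP [ha0 ha1] /andP [hb0 hb1] /andP [hc0 hc1]; rewrite /cwd.
case: (leP a b) => h1; case: (leP a c) => h2 h; lra.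
Qed.

Lemma cwd_injl (a b c : R) : 0 <= a < 1 -> 0 <= b < 1 -> 0 <= c < 1 ->
  cwd b a = cwd c a -> b = c.
Proof.
move=> /andP [ha0 ha1] /andP [hb0 hb1] /andP [hc0 hc1]; rewrite /cwd.
case: (leP b a) => h1; case: (leP c a) => h2 h; lra.
Qed.

Lemma cwdii (a : R) : cwd a a = 0.
Proof. by rewrite /cwd lexx subrr. Qed.

Lemma cwd_eq0 (a b : R) : 0 <= a < 1 -> 0 <= b < 1 -> (cwd a b == 0) = (a == b).
Proof.
move=> ha hb; apply/eqP/eqP => [h|->]; last exact: cwdii.
by have := @cwd_inj a b a ha hb ha; rewrite h cwdii => /(_ erefl) ->.
Qed.
End RealL.


Section Agent.
Variable R : realType.
Local Open Scope ring_scope.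

Definition pos (h : seq R) : R := foldl (fun x y => red (x + y)) 0 h.
Definition eqo (h : seq R) (l m : nat) : bool :=
  [&& (l <= size h)%N, (m <= size h)%N & pos (take l h) == pos (take m h)].
Definition Str (K : nat) (k : nat) (h : seq R) : bool := move K k (size h) (eqo h).
Definition leaderF (K : nat) (k : nat) (h : seq R) : bool := cand k (eqo h) K.
Definition dirF (K : nat) (k : nat) (h : seq R) : bool :=
  ~~ (cand k (eqo h) K && eqo h (BB K) (BB K).+1).
Definition ansF (K : nat) (k : nat) (h : seq R) : option (seq R) :=
  let M := (size h - BB K)%N in
  let D := Df K (eqo h) (Lf K (eqo h) M) M in
  if (0 < D)%N then Some [seq x <- [seq pos (take (BB K + l) h) | l <- iota 1 D.-1] | x != 0]
  else None.

Variables (n : nat) (p : 'I_n -> R) (o : 'I_n -> bool) (id : 'I_n -> nat) (K : nat).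
Hypothesis Hp : forall i, 0 <= p i < 1.
Hypothesis Hmono : forall i j : 'I_n, (i < j)%N -> p i < p j.

Definition gshA t := (run p o id (Str K) t).1.

Lemma run_succ t : run p o id (Str K) t.+1 =
  let sh := (run p o id (Str K) t).1 in let h := (run p o id (Str K) t).2 in
  let r := rotation_index (fun i => Str K (id i) (h i) == o i) in
  ((sh + r)%N, fun i => rcons (h i) (observed p o i (rot i sh) (rot i (sh + r)))).
Proof. by rewrite /=; case: (run p o id (Str K) t). Qed.

Lemma hist_succ t i : history p o id (Str K) t.+1 i =
  rcons (history p o id (Str K) t i)
    (observed p o i (rot i (gshA t)) (rot i (gshA t.+1))).
Proof. by rewrite /history /gshA run_succ. Qed.

Lemma hist_size t i : size (history p o id (Str K) t i) = t.
Proof. elim: t => [|t IH] //; by rewrite hist_succ size_rcons IH. Qed.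

Lemma hist_take t l i : (l <= t)%N ->
  take l (history p o id (Str K) t i) = history p o id (Str K) l i.
Proof.
elim: t => [|t IH]; first by rewrite leqn0 => /eqP ->.
rewrite leq_eqVlt => /orP [/eqP ->|hl]; first by rewrite take_oversize // hist_size.
rewrite ltnS in hl; rewrite hist_succ -cats1 take_cat hist_size.
case: (ltnP l t) => h'; first by apply: IH.
have e : l = t by apply/eqP; rewrite eqn_leq hl h'.
by rewrite e subnn take0 cats0.
Qed.

Lemma p_inj : injective p.
Proof.
move=> a b hab; apply/val_inj/eqP; case: (ltngtP a b) => // h.
  by have := Hmono h; rewrite hab ltxx.
by have := Hmono h; rewrite hab ltxx.
Qed.

Lemma obs_inj i j j' : observed p o i i j = observed p o i i j' -> j = j'.
Proof.
rewrite /observed; case: (o i) => h; apply: p_inj.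
  exact: (cwd_inj (Hp i) (Hp j) (Hp j') h).
exact: (cwd_injl (Hp i) (Hp j) (Hp j') h).
Qed.

Lemma obs_eq0 i j : (observed p o i i j == 0) = (j == i).
Proof.
rewrite /observed; case: (o i).
  by rewrite cwd_eq0 // (inj_eq p_inj) eq_sym.
by rewrite cwd_eq0 // (inj_eq p_inj).
Qed.

Lemma rot0 (i : 'I_n) : rot i 0 = i.
Proof. by apply/val_inj; rewrite /= addn0 modn_small. Qed.

Lemma rot_eq (i : 'I_n) x y : (rot i x == rot i y) = (x %% n == y %% n)%N.
Proof. by rewrite -(inj_eq val_inj) /= eqn_modDl. Qed.

Lemma pos_hist t i : pos (history p o id (Str K) t i) = observed p o i i (rot i (gshA t)).
Proof.
elim: t => [|t IH].
  by rewrite /gshA /= rot0 /observed; case: (o i); rewrite cwdii.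
rewrite hist_succ /pos foldl_rcons -/(pos _) IH /observed.
case: (o i); first by rewrite red_chain.
by rewrite addrC red_chain.
Qed.

Lemma eqo_hist t i : agree t (eqo (history p o id (Str K) t i)) (GG n gshA).
Proof.
move=> l m hl hm; rewrite /eqo hist_size hl hm /= !hist_take // !pos_hist.
rewrite /GG -(rot_eq i); by apply/eqP/eqP => [/obs_inj|->].
Qed.

Lemma Hrec_A t : gshA t.+1 =
  (gshA t + rotation_index (fun i : 'I_n => move K (id i) t (GG n gshA) == o i))%N.
Proof.
rewrite {1}/gshA run_succ /= -/(gshA t); congr (_ + _)%N.
rewrite /rotation_index; congr ((2 * _) %% n)%N; apply: eq_card => i; rewrite !inE; congr (_ == _).
by rewrite /Str -/(history _ _ _ _ t i) hist_size; apply: move_congr; exact: eqo_hist.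
Qed.
End Agent.


Lemma idb N K (id : nat) : K = (trunc_log 2 N).+1 -> (id <= N)%N -> (id < 2 ^ K)%N.
Proof. by move=> -> h; apply: (leq_ltn_trans h); apply: trunc_log_ltn. Qed.

Local Open Scope ring_scope.

Theorem corollary3 :
  exists C : nat,
  (forall (R : realType) (N : nat),
     exists (T : nat) (S : nat -> seq R -> bool) (leader : nat -> seq R -> bool),
       (T <= C * (trunc_log 2 N).+1)%N /\
       forall (n : nat) (p : 'I_n -> R) (o : 'I_n -> bool) (id : 'I_n -> nat),
         valid_instance p id N -> odd n ->
         #|[pred i | leader (id i) (history p o id S T i)]| = 1%N) /\
  (forall (R : realType) (N : nat),
     exists (T : nat) (S : nat -> seq R -> bool) (dir : nat -> seq R -> bool),
       (T <= C * (trunc_log 2 N).+1)%N /\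
       forall (n : nat) (p : 'I_n -> R) (o : 'I_n -> bool) (id : 'I_n -> nat),
         valid_instance p id N -> odd n ->
         nontrivial n (rotation_index (fun i : 'I_n => dir (id i) (history p o id S T i) == o i))) /\
  (forall (R : realType) (N : nat),
     exists (S : nat -> seq R -> bool) (ans : nat -> seq R -> option (seq R)),
       forall (n : nat) (p : 'I_n -> R) (o : 'I_n -> bool) (id : 'I_n -> nat),
         valid_instance p id N -> odd n ->
         forall i : 'I_n,
           (forall (t : nat) (a : seq R),
              ans (id i) (history p o id S t i) = Some a ->
              perm_eq a (relative_positions p o i)) /\
           ans (id i) (history p o id S (n + C * (trunc_log 2 N).+1) i) != None).
Proof.
exists 5; split; [|split].
- move=> R N; set K := (trunc_log 2 N).+1.
  exists (BB K), (Str (R := R) K), (leaderF (R := R) K); split; first by rewrite /BB; lia.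
  move=> n p o id [hn hN hid hidb [hp hmono]] hodd.
  have Hidb : forall i, (id i < 2 ^ K)%N.
    by move=> i; apply: (idb (N := N)) => //; case/andP: (hidb i).
  have Hrec := Hrec_A o id K hp hmono.
  have [L0 HL0] := leader_unique hn hodd hid Hidb Hrec.
  transitivity #|pred1 L0|; last exact: card1.
  apply: eq_card => i; rewrite !inE /leaderF.
  have e : cand (id i) (eqo (history p o id (Str K) (BB K) i)) K = cand (id i) (GG n (gshA p o id K)) K.
    by apply: cand_congr; exact: eqo_hist.
  by rewrite e (cand_L0 HL0).
- move=> R N; set K := (trunc_log 2 N).+1.
  exists (BB K).+1, (Str (R := R) K), (dirF (R := R) K); split; first by rewrite /BB /K; lia.
  move=> n p o id [hn hN hid hidb [hp hmono]] hodd.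
  have Hidb : forall i, (id i < 2 ^ K)%N.
    by move=> i; apply: (idb (N := N)) => //; case/andP: (hidb i).
  have Hrec := Hrec_A o id K hp hmono.
  have [L0 HL0] := leader_unique hn hodd hid Hidb Hrec.
  have := dir_nontrivial hn hodd Hrec HL0.
  congr nontrivial; rewrite /rotation_index; congr ((2 * _) %% n)%N.
  apply: eq_card => i; rewrite !inE /dirF; congr (_ == _).
  have ha := eqo_hist o id K hp hmono (t := (BB K).+1) i.
  have e : cand (id i) (eqo (history p o id (Str K) (BB K).+1 i)) K = cand (id i) (GG n (gshA p o id K)) K.
    by apply: cand_congr; apply: agree_le ha; rewrite /BB; lia.
  by rewrite e (cand_L0 HL0) ha.
move=> R N; set K := (trunc_log 2 N).+1.
exists (Str (R := R) K), (ansF (R := R) K).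
move=> n p o id [hn hN hid hidb [hp hmono]] hodd i.
have Hidb : forall i, (id i < 2 ^ K)%N.
  by move=> j; apply: (idb (N := N)) => //; case/andP: (hidb j).
have Hrec := Hrec_A o id K hp hmono.
have [L0 HL0] := leader_unique hn hodd hid Hidb Hrec.
set gsh := gshA p o id K.
have HD : forall t, (BB K <= t)%N ->
    let h := history p o id (Str K) t i in
    Df K (eqo h) (Lf K (eqo h) (t - BB K)) (t - BB K) = if (n < t - BB K)%N then n.+1 else 0%N.
  move=> t ht h.
  have ha : agree (BB K + (t - BB K)) (eqo h) (GG n gsh).
    by rewrite subnKC //; exact: eqo_hist.
  rewrite (Lf_congr ha) (Df_congr _ ha). exact: (Df_all hn hodd Hrec HL0).
split.
  move=> t a; rewrite /ansF hist_size.
  case: (leqP (BB K) t) => ht; last first.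
    by have -> : (t - BB K = 0)%N by lia.
  rewrite (HD t ht); case: (ltnP n (t - BB K)) => hM //= [<-].
  have -> : [seq pos (take (BB K + l) (history p o id (Str K) t i)) | l <- iota 1 n] =
            [seq observed p o i i j | j <- [seq rot i (zz K gsh l) | l <- iota 1 n]].
    rewrite -map_comp; apply/eq_in_map => l; rewrite mem_iota => /andP [hl1 hl2].
    by rewrite /= hist_take ?pos_hist //; lia.
  rewrite filter_map /relative_positions; apply: perm_map.
  have -> : [seq j <- [seq rot i (zz K gsh l) | l <- iota 1 n] | preim (observed p o i i) (fun x => x != 0%R) j]
          = [seq j <- [seq rot i (zz K gsh l) | l <- iota 1 n] | j != i].
    by apply: eq_filter => j; rewrite /= obs_eq0.
  apply: perm_filter; apply: uniq_perm; first exact: (rot_uniq hn hodd Hrec HL0 i).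
    exact: enum_uniq.
  have hu := (rot_uniq hn hodd Hrec HL0 i).
  have hsub : {subset [seq rot i (zz K gsh l) | l <- iota 1 n] <= enum 'I_n}.
    by move=> j _; rewrite mem_enum.
  have hsz : (size (enum 'I_n) <= size [seq rot i (zz K gsh l) | l <- iota 1 n])%N.
    by rewrite size_enum_ord size_map size_iota.
  have [_ heq] := uniq_min_size hu hsub hsz; exact: heq.
rewrite /ansF hist_size.
have ht : (BB K <= n + 5 * K)%N by rewrite /BB; lia.
rewrite (HD _ ht).
have -> : (n < n + 5 * K - BB K)%N by rewrite /BB /K; lia.
by [].
Qed.
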